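(* For every $\lambda\in\mathbb C$ and every integer $d>1$ there exists a real matrix $M$ with all entries non-negative whose Jordan decomposition contains a Jordan block with eigenvalue $\lambda$ of size $d$. *)

(* Defs.v *)
From HB Require Import structures.
From mathcomp Require Import all_boot all_order all_algebra.
From mathcomp Require Import complex.
From mathcomp Require Import reals.
Set Implicit Arguments. Unset Strict Implicit. Unset Printing Implicit Defensive.
Import Order.TTheory GRing.Theory Num.Theory.
Local Open Scope ring_scope.

Definition jordan_block (F : nzRingType) (d : nat) (lam : F) : 'M[F]_d :=
  \matrix_(i < d, j < d)
    (if i == j then lam else if j == i.+1 :> nat then 1 else 0).

Definition nonneg_mx (R : realType) (m n : nat) (M : 'M[R]_(m, n)) : Prop :=
  forall i j, 0 <= M i j.

(* A complex square matrix A "has a Jordan block J_d(lam) in its Jordan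
   decomposition": A is similar (over C) to a block-diagonal matrix
   diag(J_d(lam), N).  By uniqueness of the Jordan form, this holds iff the
   Jordan form of A contains a block of size d with eigenvalue lam. *)
Definition has_jordan_block (C : fieldType) (d m : nat) (A : 'M[C]_(d + m))
  (lam : C) : Prop :=
  exists (P : 'M[C]_(d + m)) (N : 'M[C]_m),
    P \in unitmx /\ invmx P *m A *m P = block_mx (jordan_block d lam) 0 0 N.

(* Main.v *)
Require Import Defs.
From HB Require Import structures.
From mathcomp Require Import all_boot all_order all_algebra.
From mathcomp Require Import complex mxtens.
From mathcomp Require Import reals.
From mathcomp Require Import ring lra.
Import Order.TTheory GRing.Theory Num.Theory.
Local Open Scope ring_scope.
Section S.
Variable R : realType.
Local Notation C := R[i].
Local Notation I := ('i%C : C).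
Lemma iS2 n : I ^+ n.+2 = - I ^+ n.
Proof. by rewrite !exprS mulrA -expr2 sqr_i mulN1r. Qed.
Definition Fm : 'M[C]_4 := \matrix_(a, b) (I ^+ (a * b.+1)%N).
Definition Zm : 'M[C]_4 := diag_mx (\row_(b < 4) (I ^+ b.+1)).
Definition Qm : 'M[R]_4 := \matrix_(a < 4, b < 4) ((b == (a.+1 %% 4)%N :> nat)%:R).

Lemma QF : map_mx (real_complex R) Qm *m Fm = Fm *m Zm.
Proof.
apply/matrixP => a b; rewrite !mxE !big_ord_recl !big_ord0 !mxE /=.
rewrite ?rmorph_nat /bump /=.
case: a => [[|[|[|[|a]]]] Ha] //; case: b => [[|[|[|[|b]]]] Hb] //=;
rewrite ?mulr0n ?mulr1n -?exprD ?(mulnE, addnE) /= ?iS2 ?expr0 ?expr1 ?opprK; by ring.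
Qed.

Definition Gm : 'M[C]_4 := \matrix_(a, b) (I ^+ (3 * b * a.+1)%N / 4).

Lemma FG : Fm *m Gm = 1.
Proof.
apply/matrixP => a b; rewrite !mxE !big_ord_recl big_ord0 !mxE /=.
rewrite !mulrA -!exprD /bump /=.
case: a => [[|[|[|[|a]]]] Ha] //; case: b => [[|[|[|[|b]]]] Hb] //=;
rewrite ?(mulnE, addnE) /= ?iS2 ?expr0 ?expr1 ?opprK; by field.
Qed.

Lemma Fm_unit : Fm \in unitmx.
Proof. by case/mulmx1_unit: FG. Qed.

Section Lin.
Variables (c0 c1 c2 c3 : C).
Let Qc := map_mx (real_complex R) Qm.
Definition Kc := c0%:M + c1 *: Qc + c2 *: (Qc *m Qc) + c3 *: (Qc *m Qc *m Qc).
Definition Dm := c0%:M + c1 *: Zm + c2 *: (Zm *m Zm) + c3 *: (Zm *m Zm *m Zm).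

Lemma KF : Kc *m Fm = Fm *m Dm.
Proof.
have h2 : Qc *m Qc *m Fm = Fm *m (Zm *m Zm).
  by rewrite -mulmxA QF mulmxA QF -mulmxA.
have h3 : Qc *m Qc *m Qc *m Fm = Fm *m (Zm *m Zm *m Zm).
  by rewrite -mulmxA QF mulmxA h2 -mulmxA.
rewrite /Kc /Dm !mulmxDl !mulmxDr -!scalemxAl -!scalemxAr mul_scalar_mx mul_mx_scalar.
by rewrite h2 h3 QF.
Qed.

Lemma Dm_offdiag (a b : 'I_4) : a != b -> Dm a b = 0.
Proof.
move=> /negbTE hab.
by rewrite /Dm /Zm !mulmx_diag !mxE hab !mulr0n !mulr0 !addr0.
Qed.

Lemma Dm00 : Dm ord0 ord0 = c0 + c1 * I - c2 - c3 * I.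
Proof.
rewrite /Dm /Zm !mulmx_diag !mxE /= !mulr1n -!exprD /= !iS2 ?expr0 ?expr1.
by rewrite mulrN1 mulrN.
Qed.
End Lin.


Lemma lshift_tens (n : nat) (i : 'I_n) :
  (lshift (3 * n) i : 'I_(4 * n)) = mxtens_index ((ord0 : 'I_4), i).
Proof. by apply: val_inj => /=; rewrite mul0n add0n. Qed.

Lemma rshift_tens (n : nat) (a : 'I_3) (b : 'I_n) :
  (rshift n (mxtens_index (a, b)) : 'I_(4 * n)) = mxtens_index (lift ord0 a, b).
Proof. by apply: val_inj => /=; rewrite /bump /= add1n mulSn addnA. Qed.

Lemma jb_map (n : nat) :
  map_mx (real_complex R) (jordan_block n (0 : R)) = jordan_block n (0 : C).
Proof.
apply/matrixP => i j; rewrite !mxE.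
by case: eqP => _; [|case: eqP => _]; rewrite ?rmorph0 ?rmorph1.
Qed.

Lemma tens_block (n : nat) (D : 'M[C]_4) :
  (forall a b : 'I_4, a != b -> D a b = 0) ->
  let X : 'M[C]_(n + 3 * n) := D *t (1%:M : 'M_n) + (1%:M : 'M_4) *t jordan_block n 0 in
  X = block_mx (jordan_block n (D ord0 ord0)) 0 0 (drsubmx X).
Proof.
move=> hD X.
have h1 : ulsubmx X = jordan_block n (D ord0 ord0).
  apply/matrixP => i j; rewrite !mxE !lshift_tens !mxtens_indexK /= mul1r.
  by case: eqP => _; rewrite ?mulr1 ?addr0 ?mulr0 ?add0r.
have h2 : ursubmx X = 0.
  apply/matrixP => i j; case: (mxtens_indexP j) => a b.
  rewrite !mxE lshift_tens rshift_tens !mxtens_indexK /= hD ?neq_lift // mul0r add0r.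
  by rewrite mul0r.
have h3 : dlsubmx X = 0.
  apply/matrixP => i j; case: (mxtens_indexP i) => a b.
  rewrite !mxE lshift_tens rshift_tens !mxtens_indexK /= hD; last by rewrite eq_sym neq_lift.
  by rewrite !mul0r addr0.
by rewrite -{1}[X]submxK h1 h2 h3.
Qed.

Definition nn {m n : nat} (A : 'M[R]_(m, n)) := forall i j, 0 <= A i j.

Lemma nn_add m n (A B : 'M[R]_(m, n)) : nn A -> nn B -> nn (A + B).
Proof. by move=> hA hB i j; rewrite mxE addr_ge0. Qed.
Lemma nn_scale m n c (A : 'M[R]_(m, n)) : 0 <= c -> nn A -> nn (c *: A).
Proof. by move=> hc hA i j; rewrite mxE mulr_ge0. Qed.
Lemma nn_mul m n p (A : 'M[R]_(m, n)) (B : 'M[R]_(n, p)) : nn A -> nn B -> nn (A *m B).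
Proof. by move=> hA hB i j; rewrite mxE; apply: sumr_ge0 => k _; rewrite mulr_ge0. Qed.
Lemma nn_scalar n c : 0 <= c -> nn (c%:M : 'M[R]_n).
Proof. by move=> hc i j; rewrite mxE mulrn_wge0. Qed.
Lemma nn_tens m n p q (A : 'M[R]_(m, n)) (B : 'M[R]_(p, q)) : nn A -> nn B -> nn (A *t B).
Proof. by move=> hA hB i j; rewrite mxE mulr_ge0. Qed.
Lemma nn_Q : nn Qm.
Proof. by move=> i j; rewrite mxE ler0n. Qed.
Lemma nn_J n : nn (jordan_block n (0 : R)).
Proof. by move=> i j; rewrite mxE; case: eqP => _; [|case: eqP => _]. Qed.

Lemma maxdec (x : R) : x = Num.max x 0 - Num.max (-x) 0.
Proof.
case: (ltP x 0) => h1; case: (ltP (-x) 0) => h2; lra.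
Qed.

Lemma maxge0 (x : R) : 0 <= Num.max x 0.
Proof. by rewrite le_max lexx orbT. Qed.

End S.

Theorem lemma8 (R : realType) (lam : R[i]) (d : nat) (hd : (1 < d)%N) :
  exists (m : nat) (M : 'M[R]_(d + m)),
    nonneg_mx M /\
    has_jordan_block (map_mx (fun x : R => Complex x 0) M) lam.
Proof.
case: lam => x y.
pose c0 := Num.max x 0; pose c2 := Num.max (-x) 0.
pose c1 := Num.max y 0; pose c3 := Num.max (-y) 0.
pose Qc := map_mx (real_complex R) (Qm R).
pose Kr : 'M[R]_4 := c0%:M + c1 *: Qm R + c2 *: (Qm R *m Qm R)
   + c3 *: (Qm R *m Qm R *m Qm R).
pose Mr : 'M[R]_(4 * d) := Kr *t (1%:M : 'M_d) + (1%:M : 'M_4) *t jordan_block d (0 : R).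
exists (3 * d)%N.
exists Mr; split.
  have : nn R Mr.
    apply: nn_add; apply: nn_tens.
    + apply: nn_add; [apply: nn_add; [apply: nn_add|]|].
      * apply: nn_scalar; exact: maxge0.
      * apply: nn_scale; [exact: maxge0| exact: nn_Q].
      * apply: nn_scale; [exact: maxge0| apply: nn_mul; exact: nn_Q].
      * apply: nn_scale; [exact: maxge0| (apply: nn_mul; [apply: nn_mul|]); exact: nn_Q].
    + apply: nn_scalar; exact: ler01.
    + apply: nn_scalar; exact: ler01.
    + exact: nn_J.
  by [].
have -> : map_mx (fun x : R => Complex x 0) Mr = map_mx (real_complex R) Mr by [].
pose f := real_complex R.
have hM : map_mx f Mr = Kc R (f c0) (f c1) (f c2) (f c3) *t (1%:M : 'M_d)
     + (1%:M : 'M_4) *t jordan_block d (0 : R[i]).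
  rewrite /Mr map_mxD !map_mxT !map_mx1 jb_map; congr (_ *t _ + _).
  by rewrite /Kr /Kc !map_mxD !map_mxZ !map_mxM map_scalar_mx.
pose D := Dm R (f c0) (f c1) (f c2) (f c3).
pose P : 'M[R[i]]_(4 * d) := Fm R *t (1%:M : 'M_d).
have hP : P \in unitmx.
  apply: tensmx_unit => //; first by apply/eqP => h; move: hd; rewrite h.
  - exact: Fm_unit.
  - exact: unitmx1.
have hMP : map_mx f Mr *m P = P *m (D *t (1%:M : 'M_d) + (1%:M : 'M_4) *t jordan_block d (0 : R[i])).
  rewrite hM /P mulmxDl mulmxDr !tensmx_mul !mul1mx !mulmx1 KF //.
have hD00 : D ord0 ord0 = Complex x y.
  rewrite /D Dm00 /f [RHS]complexE /= [in RHS](@maxdec R x) [in RHS](@maxdec R y).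
  rewrite -/c0 -/c1 -/c2 -/c3 !rmorphB /=; ring.
have := @tens_block R d _ (@Dm_offdiag R (f c0) (f c1) (f c2) (f c3)).
rewrite -/D hD00 => hB.
exists P, (drsubmx (D *t (1%:M : 'M_d) + (1%:M : 'M_4) *t jordan_block d (0 : R[i]) : 'M_(d + 3 * d))).
split; first exact: hP.
rewrite -hB.
by rewrite -mulmxA hMP mulKmx.
Qed.
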